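(* Let $Q$ be an $n\times n$ real symmetric matrix, $\Delta_n := \{x \in \mathbb{R}^n : x \ge 0,\ \sum_j x_j = 1\}$, $\nu(Q) := \min_{x\in\Delta_n} x^TQx$, let $\ell$ be any lower bound on $\nu(Q)$, let $M_j = \max_{i=1,\ldots,n} Q_{ij} - \ell$ and let $U_j \ge M_j$ for $j = 1,\ldots,n$. Let $e_j$ denote the $j$-th unit vector and $e$ the all-ones vector in $\mathbb{R}^n$. Consider the two mixed integer linear programs (MILP1), in variables $x,s\in\mathbb{R}^n$, $y\in\{0,1\}^n$, $\lambda\in\mathbb{R}$: \[ \min\ \lambda\ \text{ s.t. } Qx - \lambda e - s = 0,\ e^Tx = 1,\ x_j \le y_j,\ s_j \le M_j(1-y_j)\ (j=1,\ldots,n),\ x\ge 0,\ s \ge 0,\ y_j\in\{0,1\}; \] (MILP2), in variables $x,z\in\mathbb{R}^n$, $y\in\{0,1\}^n$, $\alpha\in\mathbb{R}$: \[ \min\ \alpha\ \text{ s.t. } e_j^TQx \le \alpha + z_j,\ e^Tx = 1,\ x_j \le y_j,\ z_j \le U_j(1-y_j)\ (j=1,\ldots,n),\ x\ge 0,\ z\ge 0,\ y_j\in\{0,1\}. \] Then the inequalities \[ y_i + y_j \le 1 \quad \text{for all } 1 \le i < j \le n \text{ with } Q_{ii} + Q_{jj} - 2Q_{ij} \le 0 \] are valid for both (MILP1) and (MILP2), i.e., adding them to either formulation does not change its optimal value $\nu(Q)$. *)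

(* Defs.v *)
From HB Require Import structures.
From mathcomp Require Import all_boot all_order all_algebra.
From mathcomp Require Import reals.
Set Implicit Arguments. Unset Strict Implicit. Unset Printing Implicit Defensive.
Import Order.TTheory GRing.Theory Num.Theory.
Local Open Scope ring_scope.

Section Defs.
Variables (R : realType) (n : nat).

Definition in_simplex (x : 'cV[R]_n) : Prop :=
  (forall j, 0 <= x j 0) /\ \sum_(j < n) x j 0 = 1.

Definition qform (Q : 'M[R]_n) (x : 'cV[R]_n) : R := (x^T *m Q *m x) 0 0.

Definition is_simplex_min (Q : 'M[R]_n) (nu : R) : Prop :=
  (exists2 x, in_simplex x & qform Q x = nu) /\
  (forall x, in_simplex x -> nu <= qform Q x).

(* max_{i} Q_ij  (the seed Q_jj is itself one of the entries) *)
Definition colmax (Q : 'M[R]_n) (j : 'I_n) : R :=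
  \big[Num.max/Q j j]_(i < n) Q i j.

Definition Mbig (Q : 'M[R]_n) (l : R) (j : 'I_n) : R := colmax Q j - l.

Definition bin (b : bool) : R := (b : nat)%:R.

Definition milp1_feas (Q : 'M[R]_n) (M : 'I_n -> R)
    (x s : 'cV[R]_n) (y : 'I_n -> bool) (lam : R) : Prop :=
  Q *m x - lam *: const_mx 1 - s = 0 /\
  \sum_(j < n) x j 0 = 1 /\
  (forall j, x j 0 <= bin (y j)) /\
  (forall j, s j 0 <= M j * (1 - bin (y j))) /\
  (forall j, 0 <= x j 0) /\ (forall j, 0 <= s j 0).

Definition milp2_feas (Q : 'M[R]_n) (U : 'I_n -> R)
    (x z : 'cV[R]_n) (y : 'I_n -> bool) (alpha : R) : Prop :=
  (forall j, (Q *m x) j 0 <= alpha + z j 0) /\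
  \sum_(j < n) x j 0 = 1 /\
  (forall j, x j 0 <= bin (y j)) /\
  (forall j, z j 0 <= U j * (1 - bin (y j))) /\
  (forall j, 0 <= x j 0) /\ (forall j, 0 <= z j 0).

Definition cuts (Q : 'M[R]_n) (y : 'I_n -> bool) : Prop :=
  forall i j : 'I_n, (i < j)%N -> Q i i + Q j j - 2 * Q i j <= 0 ->
    bin (y i) + bin (y j) <= 1.

Definition opt_value1 (Q : 'M[R]_n) (M : 'I_n -> R) (withcuts : bool) (v : R) : Prop :=
  (exists x s y, milp1_feas Q M x s y v /\ (withcuts -> cuts Q y)) /\
  (forall x s y lam, milp1_feas Q M x s y lam -> (withcuts -> cuts Q y) -> v <= lam).

Definition opt_value2 (Q : 'M[R]_n) (U : 'I_n -> R) (withcuts : bool) (v : R) : Prop :=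
  (exists x z y, milp2_feas Q U x z y v /\ (withcuts -> cuts Q y)) /\
  (forall x z y a, milp2_feas Q U x z y a -> (withcuts -> cuts Q y) -> v <= a).

End Defs.

(* Main.v *)
Require Import Defs.
From HB Require Import structures.
From mathcomp Require Import all_boot all_order all_algebra.
From mathcomp Require Import reals.
From mathcomp Require Import ring lra.
Import Order.TTheory GRing.Theory Num.Theory.
Local Open Scope ring_scope.

Section Aux.
Variables (R : realType) (n : nat) (Q : 'M[R]_n).
Hypothesis sQ : Q^T = Q.

Definition B (u w : 'cV[R]_n) : R := (u^T *m Q *m w) 0 0.

Lemma Bsum u w : B u w = \sum_a u a 0 * (Q *m w) a 0.
Proof. by rewrite /B -mulmxA mxE; apply: eq_bigr => a _; rewrite mxE. Qed.

Lemma BlinL u1 u2 c w : B (u1 + c *: u2) w = B u1 w + c * B u2 w.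
Proof.
rewrite !Bsum mulr_sumr -big_split /=; apply: eq_bigr => a _.
by rewrite !mxE mulrDl mulrA.
Qed.

Lemma Bsym u w : B u w = B w u.
Proof.
rewrite /B.
have h : forall A : 'M[R]_1, A 0 0 = A^T 0 0 by move=> A; rewrite mxE.
rewrite h.
by rewrite !trmx_mul trmxK sQ mulmxA.
Qed.

Lemma qexp x t v : qform Q (x + t *: v) = qform Q x + 2 * t * B v x + t ^+ 2 * qform Q v.
Proof.
have E : forall u, qform Q u = B u u by [].
rewrite !E BlinL Bsym BlinL [B v (x + _)]Bsym BlinL [B x v]Bsym.
rewrite /=; ring.
Qed.

Lemma Bdelta i w : B (delta_mx i 0) w = (Q *m w) i 0.
Proof.
rewrite Bsum (bigD1 i) //= big1 => [|a /negbTE ha]; rewrite mxE ?ha ?eqxx /=.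
  by rewrite mul1r addr0.
by rewrite mul0r.
Qed.

Lemma sum_delta i : \sum_a (delta_mx i 0 : 'cV[R]_n) a 0 = 1.
Proof.
rewrite (bigD1 i) //= big1 => [|a /negbTE ha]; rewrite mxE ?ha ?eqxx //=.
by rewrite addr0.
Qed.

Lemma sum_add x t v : \sum_a (x + t *: v : 'cV[R]_n) a 0 = \sum_a x a 0 + t * \sum_a v a 0.
Proof. by rewrite mulr_sumr -big_split; apply: eq_bigr => a _; rewrite !mxE. Qed.

Lemma qform_sum x : qform Q x = \sum_a x a 0 * (Q *m x) a 0.
Proof. exact: Bsum. Qed.

Lemma quad_pos (a b : R) : (forall t, 0 < t -> t <= 1 -> 0 <= t * b + t ^+ 2 * a) -> 0 <= b.
Proof.
move=> H; rewrite leNgt; apply/negP => bneg.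
pose t := Num.min 1 ((- b) / (2 * (`|a| + 1))).
have ha : 0 < `|a| + 1 by rewrite ltr_wpDl.
have tpos : 0 < t by rewrite lt_min ltr01 /= divr_gt0 ?oppr_gt0 // mulr_gt0.
have t1 : t <= 1 by rewrite ge_min lexx.
have tle : t <= (- b) / (2 * (`|a| + 1)) by rewrite ge_min lexx orbT.
have := H t tpos t1.
have : t * b + t ^+ 2 * a < 0; last by move=> /lt_le_trans h /h; rewrite ltxx.
have h1 : t * a <= t * `|a| by apply: ler_wpM2l; [exact: ltW | exact: ler_norm].
have h2 : t * `|a| < - b / 2.
  have : t * (`|a| + 1) <= - b / 2.
    rewrite -ler_pdivlMr // -mulrA -invfM.
    exact: tle.
  apply: lt_le_trans; rewrite mulrDr mulr1 ltrDl //.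
have e : t * b + t ^+ 2 * a = t * (b + t * a) by rewrite expr2; ring.
rewrite e pmulr_rlt0 //.
have : b + t * a < b + - b / 2 by rewrite ltrD2l (le_lt_trans h1 h2).
move/lt_le_trans; apply.
have -> : b + - b / 2 = b / 2 by field.
by rewrite pmulr_lle0 ?invr_gt0 // ltW.
Qed.


Variable nu : R.
Hypothesis numin : forall y, in_simplex y -> nu <= qform Q y.

Lemma kkt x : in_simplex x -> qform Q x = nu -> forall k, nu <= (Q *m x) k 0.
Proof.
move=> [x0 x1] qx k.
pose v : 'cV[R]_n := delta_mx k 0 + (-1) *: x.
have Bv : B v x = (Q *m x) k 0 - nu by rewrite BlinL Bdelta -qx; rewrite /qform /B; ring.
suff : 0 <= 2 * B v x by rewrite Bv pmulr_rge0 // subr_ge0.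
apply: (@quad_pos (qform Q v)) => t t0 t1.
have sy : in_simplex (x + t *: v).
  split.
    move=> a; rewrite !mxE /= andbT.
    have -> : x a 0 + t * ((a == k)%:R + -1 * x a 0) = (1 - t) * x a 0 + t * (a == k)%:R
      by ring.
    by rewrite addr_ge0 // mulr_ge0 // ?subr_ge0 // ltW.
  by rewrite sum_add /v sum_add sum_delta x1 mulN1r subrr mulr0 addr0.
have := numin _ sy; rewrite qexp qx.
by rewrite -subr_ge0 => h; rewrite mulrA (mulrC t); move: h; congr (0 <= _); ring.
Qed.


Lemma kkt_eq x : in_simplex x -> qform Q x = nu -> forall k, x k 0 != 0 -> (Q *m x) k 0 = nu.
Proof.
move=> sx qx k xk; have [x0 x1] := sx.
have E : \sum_a x a 0 * ((Q *m x) a 0 - nu) = 0.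
  under eq_bigr => a _ do rewrite mulrBr.
  by rewrite sumrB -qform_sum qx -mulr_suml x1 mul1r subrr.
have P0 : forall a, true -> 0 <= x a 0 * ((Q *m x) a 0 - nu).
  by move=> a _; rewrite mulr_ge0 // subr_ge0 (kkt _ sx qx).
have /eqP := (@psumr_eq0P _ _ _ _ P0 E k isT).
by rewrite mulf_eq0 (negbTE xk) /= subr_eq0 => /eqP.
Qed.

Lemma Qdelta (a b : 'I_n) : (Q *m (delta_mx a 0 : 'cV[R]_n)) b 0 = Q b a.
Proof.
rewrite mxE (bigD1 a) //= big1 => [|c /negbTE hc]; rewrite mxE ?hc ?eqxx //=.
  by rewrite mulr1 addr0.
by rewrite mulr0.
Qed.


Definition supp (x : 'cV[R]_n) := [set a | x a 0 != 0].

Lemma step x (i j : 'I_n) : in_simplex x -> qform Q x = nu -> (i < j)%N ->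
  x i 0 != 0 -> x j 0 != 0 -> Q i i + Q j j - 2 * Q i j <= 0 ->
  exists2 x', in_simplex x' & qform Q x' = nu /\ supp x' \proper supp x.
Proof.
move=> [x0 x1] qx ij xi xj d0.
have nij : i != j by rewrite neq_ltn ij.
have Qji : Q j i = Q i j by have := congr1 (fun M : 'M[R]_n => M i j) sQ; rewrite mxE.
pose v : 'cV[R]_n := delta_mx i 0 + (-1) *: delta_mx j 0.
have qv : qform Q v = Q i i + Q j j - 2 * Q i j.
  rewrite /qform -/(B v v) BlinL (Bsym (delta_mx i 0)) (Bsym (delta_mx j 0)) !BlinL.
  rewrite !Bdelta !Qdelta Qji; ring.
pose g := B v x.
pose t := if 0 <= g then - x i 0 else x j 0.
have tg : t * g <= 0.
  rewrite /t; case: ifP => hg.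
    by rewrite mulNr oppr_le0 mulr_ge0.
  by rewrite mulr_ge0_le0 // ltW // ltNge hg.
have ent : forall a, (x + t *: v) a 0 = x a 0 + t * ((a == i)%:R + -1 * (a == j)%:R).
  by move=> a; rewrite !mxE /= !andbT.
have ei : (x + t *: v) i 0 = x i 0 + t by rewrite ent eqxx (negbTE nij) /=; ring.
have ej : (x + t *: v) j 0 = x j 0 - t by rewrite ent eqxx eq_sym (negbTE nij) /=; ring.
have eo : forall a, a != i -> a != j -> (x + t *: v) a 0 = x a 0.
  by move=> a ai aj; rewrite ent (negbTE ai) (negbTE aj) /=; ring.
have sy : in_simplex (x + t *: v).
  split.
    move=> a; case: (eqVneq a i) => [->|ai]; first rewrite ei.
      rewrite /t; case: ifP => _; first by rewrite subrr.
      by rewrite addr_ge0.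
    case: (eqVneq a j) => [->|aj]; first rewrite ej.
      rewrite /t; case: ifP => _; last by rewrite subrr.
      by rewrite opprK addr_ge0.
    by rewrite eo.
  by rewrite sum_add /v sum_add !sum_delta x1; ring.
exists (x + t *: v) => //.
split.
  apply/eqP; rewrite eq_le numin // andbT qexp qx.
  rewrite -/g qv.
  have h1 : 2 * t * g <= 0 by rewrite -mulrA mulr_ge0_le0.
  have h2 : t ^+ 2 * (Q i i + Q j j - 2 * Q i j) <= 0 by rewrite mulr_ge0_le0 // sqr_ge0.
  lra.
apply/properP; split.
  apply/subsetP => a; rewrite !inE.
  case: (eqVneq a i) => [->|ai] //; case: (eqVneq a j) => [->|aj] //.
  by rewrite eo.
have [hg|hg] := boolP (0 <= g).
  have tv : t = - x i 0 by rewrite /t hg.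
  by exists i; rewrite !inE // ei tv subrr eqxx.
have tv : t = x j 0 by rewrite /t (negbTE hg).
by exists j; rewrite !inE // ej tv subrr eqxx.
Qed.


Definition good (x : 'cV[R]_n) := forall i j : 'I_n, (i < j)%N -> x i 0 != 0 -> x j 0 != 0 ->
  0 < Q i i + Q j j - 2 * Q i j.

Lemma reduce k : forall x, in_simplex x -> qform Q x = nu -> (#|supp x| <= k)%N ->
  exists2 x', in_simplex x' & qform Q x' = nu /\ good x'.
Proof.
elim: k => [|k IH] x sx qx hk;
 (case b: [forall i : 'I_n, forall j : 'I_n, ((i < j)%N && (x i 0 != 0) && (x j 0 != 0)) ==>
     (0 < Q i i + Q j j - 2 * Q i j)];
  [ exists x => //; split => // i j ij xi xj;
    by move/forallP/(_ i)/forallP/(_ j)/implyP: b; apply; rewrite ij xi xj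
  | move/negbT: b; rewrite negb_forall => /existsP [i];
    rewrite negb_forall => /existsP [j];
    rewrite negb_imply => /andP [/andP [/andP [ij xi] xj] hd];
    rewrite -leNgt in hd;
    have [x' sx' [qx' px']] := step _ _ _ sx qx ij xi xj hd;
    have := proper_card px' ]).
  by move=> hc; move: (leq_trans hc hk).
move=> hc; apply: (IH x' sx' qx'); rewrite -ltnS (leq_trans hc hk) //.
Qed.


Lemma entB (A : 'cV[R]_n) c a : (A - c *: const_mx 1) a 0 = A a 0 - c.
Proof. by rewrite !mxE mulr1. Qed.

Lemma compl (x s : 'cV[R]_n) (y : 'I_n -> bool) (M : 'I_n -> R) a :
  x a 0 <= @bin R (y a) -> s a 0 <= M a * (1 - @bin R (y a)) -> 0 <= x a 0 -> 0 <= s a 0 ->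
  x a 0 * s a 0 = 0.
Proof.
rewrite /bin; case: (y a) => /= hx hs x0 s0.
  have -> : s a 0 = 0 by move: hs; rewrite subrr mulr0 => hs; apply/le_anti; rewrite hs s0.
  by rewrite mulr0.
have -> : x a 0 = 0 by apply/le_anti; rewrite hx x0.
by rewrite mul0r.
Qed.
Arguments compl {x s y M a}.

Lemma lb1 M x s y lam : milp1_feas Q M x s y lam -> nu <= lam.
Proof.
move=> [E [x1 [xy [sy [x0 s0]]]]].
move/eqP: E; rewrite subr_eq0 subr_eq => /eqP E.
have sx : in_simplex x by [].
have := numin _ sx; rewrite qform_sum E.
under eq_bigr => a _ do rewrite !mxE mulr1 mulrDr (compl (xy a) (sy a) (x0 a) (s0 a)) add0r.
by rewrite -mulr_suml x1 mul1r.
Qed.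

Lemma lb2 U x z y al : milp2_feas Q U x z y al -> nu <= al.
Proof.
move=> [E [x1 [xy [zy [x0 z0]]]]].
have sx : in_simplex x by [].
apply: (le_trans (numin _ sx)); rewrite qform_sum.
apply: (@le_trans _ _ (\sum_a x a 0 * (al + z a 0))).
  by apply: ler_sum => a _; apply: ler_wpM2l.
under eq_bigr => a _ do rewrite mulrDr (compl (xy a) (zy a) (x0 a) (z0 a)) addr0.
by rewrite -mulr_suml x1 mul1r.
Qed.

End Aux.

Theorem theorem2 (R : realType) (n : nat) (Q : 'M[R]_n) (nu l : R)
    (U : 'I_n -> R) :
  Q^T = Q ->
  is_simplex_min Q nu ->
  l <= nu ->
  (forall j, Mbig Q l j <= U j) ->
  (opt_value1 Q (Mbig Q l) false nu /\ opt_value1 Q (Mbig Q l) true nu) /\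
  (opt_value2 Q U false nu /\ opt_value2 Q U true nu).
Proof.
move=> sQ [[x0 sx0 qx0] numin] lnu MU.
have [x sx [qx gx]] := @reduce R n Q sQ nu numin _ x0 sx0 qx0 (leqnn _).
have [xge x1] := sx.
pose s : 'cV[R]_n := Q *m x - nu *: const_mx 1.
pose y := fun a : 'I_n => x a 0 != 0.
have hs : forall a, s a 0 = (Q *m x) a 0 - nu by move=> a; rewrite entB.
have s0 : forall a, 0 <= s a 0 by move=> a; rewrite hs subr_ge0 (@kkt R n Q sQ nu numin).
have xy : forall a, x a 0 <= @bin R (y a).
  move=> a; rewrite /y /bin; case: eqP => [->|_] //=.
  by rewrite -x1 (bigD1 a) //= lerDl sumr_ge0.
have Qsym : forall a b, Q a b = Q b a.
  by move=> a b; have := congr1 (fun M : 'M[R]_n => M b a) sQ; rewrite mxE.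
have sM : forall a, s a 0 <= Mbig Q l a * (1 - @bin R (y a)).
  move=> a; rewrite /y /bin; case: eqP => [xa|/eqP xa] /=.
    rewrite subr0 mulr1 hs /Mbig lerB //.
    rewrite mxE; apply: (@le_trans _ _ (\sum_i colmax Q a * x i 0)).
      apply: ler_sum => i _; apply: ler_wpM2r => //.
      by rewrite Qsym /colmax; exact: (@le_bigmax _ _ _ (Q a a) (fun k => Q k a) i).
    by rewrite -mulr_sumr x1 mulr1.
  by rewrite subrr mulr0 hs (@kkt_eq R n Q sQ nu numin x sx qx a xa) subrr.
have cut : cuts Q y.
  move=> i j ij hd; rewrite /y /bin.
  case hi: (x i 0 != 0); case hj: (x j 0 != 0) => /=; rewrite ?addr0 ?add0r ?ler01 //.
  by have := gx i j ij hi hj; rewrite ltNge hd.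
have F1 : milp1_feas Q (Mbig Q l) x s y nu.
  by do !split => //; rewrite /s subrr.
have F2 : milp2_feas Q U x s y nu.
  split; first by move=> a; rewrite hs addrC subrK.
  split; first exact: x1.
  split; first exact: xy.
  split; last by split.
  move=> a; apply: (le_trans (sM a)); apply: ler_wpM2r => //.
  by rewrite subr_ge0 /bin; case: (y a).
split; split; split.
- by exists x, s, y.
- by move=> ? ? ? ? F _; exact: (@lb1 R n Q nu numin _ _ _ _ _ F).
- by exists x, s, y.
- by move=> ? ? ? ? F _; exact: (@lb1 R n Q nu numin _ _ _ _ _ F).
- by exists x, s, y.
- by move=> ? ? ? ? F _; exact: (@lb2 R n Q nu numin _ _ _ _ _ F).
- by exists x, s, y.
- by move=> ? ? ? ? F _; exact: (@lb2 R n Q nu numin _ _ _ _ _ F).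
Qed.
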